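(* Let $n$ be a positive even integer and let $G$ be a $2r$-regular graph ($r\ge1$) of order $m$ with chromatic number $3$, having a proper $3$-coloring such that for each vertex $v$, $N(v)$ can be partitioned into two monochromatic subsets, each of size $r$, of two different colors. Then $\chi_{ld}(G[\overline{K_{n}}]) = 3$.
   Context: All graphs are finite, simple and undirected. For a graph $G=(V,E)$ of order $N$ without isolated vertices, a bijection $f\colon V\to\{1,2,\dots,N\}$ is a local distance antimagic labeling if $w(u)\neq w(v)$ for every edge $uv$, where $w(u)=\sum_{x\in N(u)}f(x)$ and $N(u)$ is the open neighborhood of $u$. $\chi_{ld}(G)$ is the minimum number of distinct weights over all local distance antimagic labelings of $G$. $\overline{K_n}$ is the edgeless graph on $n$ vertices. The lexicographic product $G[H]$ has vertex set $V(G)\times V(H)$, with $(g,h)$ adjacent to $(g',h')$ iff $gg'\in E(G)$, or $g=g'$ and $hh'\in E(H)$. *)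

(* Defs.v *)
From mathcomp Require Import all_boot.
Set Implicit Arguments. Unset Strict Implicit. Unset Printing Implicit Defensive.

Definition simple_graph (V : finType) (e : rel V) : Prop :=
  symmetric e /\ irreflexive e.

Definition nbhd (V : finType) (e : rel V) (v : V) : {set V} := [set y | e v y].

Definition regular (V : finType) (e : rel V) (d : nat) : Prop :=
  forall v : V, #|nbhd e v| = d.

Definition no_isolated (V : finType) (e : rel V) : Prop :=
  forall v : V, exists u, e v u.

Definition proper_coloring (V : finType) (e : rel V) (k : nat) (c : V -> 'I_k) : Prop :=
  forall x y, e x y -> c x != c y.

Definition colorable (V : finType) (e : rel V) (k : nat) : Prop :=
  exists c : V -> 'I_k, proper_coloring e c.

Definition chromatic_number_eq (V : finType) (e : rel V) (k : nat) : Prop :=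
  colorable e k /\ forall j, j < k -> ~ colorable e j.

Definition edgeless (n : nat) : rel 'I_n := fun _ _ => false.

Definition lexprod (T U : finType) (e : rel T) (h : rel U) : rel (T * U)%type :=
  fun x y => e x.1 y.1 || ((x.1 == y.1) && h x.2 y.2).

Definition is_labeling (V : finType) (f : V -> nat) : Prop :=
  [/\ forall x, 0 < f x <= #|V|,
      injective f &
      forall k, 0 < k <= #|V| -> exists x, f x = k].

Definition weight (V : finType) (e : rel V) (f : V -> nat) (u : V) : nat :=
  \sum_(x | e u x) f x.

Definition ld_antimagic (V : finType) (e : rel V) (f : V -> nat) : Prop :=
  is_labeling f /\ forall u v, e u v -> weight e f u != weight e f v.

Definition num_weights (V : finType) (e : rel V) (f : V -> nat) : nat :=
  size (undup [seq weight e f u | u <- enum V]).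

Definition chi_ld_eq (V : finType) (e : rel V) (k : nat) : Prop :=
  (exists f, ld_antimagic e f /\ num_weights e f = k) /\
  (forall f, ld_antimagic e f -> k <= num_weights e f).

(* Main.v *)
Require Import Defs.
From mathcomp Require Import all_boot zify.
Set Implicit Arguments. Unset Strict Implicit. Unset Printing Implicit Defensive.

Definition rk (V : finType) (key : V -> nat) (u : V) : nat := #|[set w | key w < key u]|.

Lemma rk_lt (V : finType) (key : V -> nat) u : rk key u < #|V|.
Proof.
rewrite /rk -cardsT; apply: proper_card; rewrite properE subsetT /=.
apply/subsetPn; exists u; first by []. by rewrite inE ltnn.
Qed.

Lemma rk_inj (V : finType) (key : V -> nat) : injective key -> injective (rk key).
Proof.
move=> ik u v huv; apply: ik; apply/eqP; apply/negPn/negP => hne.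
suff: forall a b, key a < key b -> rk key a < rk key b.
  by move=> H; case: (ltngtP (key u) (key v)) hne => // h _; move: (H _ _ h); rewrite huv ltnn.
move=> a b hab; apply: proper_card; rewrite properE; apply/andP; split.
  by apply/subsetP => w; rewrite !inE => h; apply: ltn_trans h hab.
by apply/subsetPn; exists a; rewrite !inE ?hab ?ltnn.
Qed.

Lemma mod_inj (a b x y m : nat) : a * m + x = b * m + y -> x < m -> y < m -> x = y.
Proof.
move=> h hx hy; have := congr1 (fun t => t %% m) h => /=.
by rewrite !modnMDl !modn_small.
Qed.

Definition key1 (V : finType) (c : V -> 'I_3) (u : V) : nat := c u * #|V| + enum_rank u.
Definition key2 (V : finType) (c : V -> 'I_3) (u : V) : nat := c u * #|V| + (#|V|.-1 - enum_rank u).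

Lemma key1_inj (V : finType) (c : V -> 'I_3) : injective (key1 c).
Proof.
move=> u v h; apply: enum_rank_inj; apply: val_inj => /=.
by apply: (mod_inj h); apply: ltn_ord.
Qed.

Lemma key2_inj (V : finType) (c : V -> 'I_3) : injective (key2 c).
Proof.
move=> u v h; apply: enum_rank_inj; apply: val_inj => /=.
have hu : enum_rank u < #|V| := ltn_ord _. have hv : enum_rank v < #|V| := ltn_ord _.
have := mod_inj h; rewrite -subn1; move=> H.
have key : forall a b : nat, a < #|V| -> b < #|V| -> (a < #|V| -> b < #|V| -> #|V| - 1 - a = #|V| - 1 - b) -> a = b.
  move=> a b ha hb hh; have := hh ha hb; lia.
apply: key hu hv _ => h1 h2; apply: H; lia.
Qed.

Definition Pj (V : finType) (c : V -> 'I_3) (j : nat) (u : V) : nat :=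
  if j == 0 then rk (key1 c) u else if j == 1 then rk (key2 c) u
  else if odd j then #|V|.-1 - rk (key1 c) u else rk (key1 c) u.

Lemma Pj_lt (V : finType) c j (u : V) : Pj c j u < #|V|.
Proof.
have := rk_lt (key1 c) u; have := rk_lt (key2 c) u.
rewrite /Pj; case: ifP => _; first lia; case: ifP => _; first lia; case: ifP => _; lia.
Qed.

Lemma Pj_inj (V : finType) c j : injective (@Pj V c j).
Proof.
move=> u v; have := rk_lt (key1 c) u; have := rk_lt (key1 c) v.
have i1 := rk_inj (@key1_inj _ c); have i2 := rk_inj (@key2_inj _ c).
rewrite /Pj; case: ifP => _; first by move=> _ _ /i1.
case: ifP => _; first by move=> _ _ /i2.
case: ifP => _; last by move=> _ _ /i1.
move=> h1 h2 h; apply: i1; lia.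
Qed.

Lemma sumP (V : finType) c (u : V) k :
  \sum_(0 <= j < k.*2.+2) Pj c j u = rk (key1 c) u + rk (key2 c) u + k * #|V|.-1.
Proof.
elim: k => [|k IH]; first by rewrite big_nat_recr //= big_nat1 /Pj /=; lia.
rewrite doubleS big_nat_recr //= big_nat_recr //= IH.
have := rk_lt (key1 c) u.
rewrite /Pj /= odd_double /=; lia.
Qed.

Lemma pt (cw cu ew eu m : nat) : cw < 3 -> cu < 3 -> ew < m -> eu < m -> ew != eu ->
 (cw * m + ew < cu * m + eu) + (cw * m + (m.-1 - ew) < cu * m + (m.-1 - eu))
   = 2 * (cw < cu) + (cw == cu).
Proof.
move=> hw hu hew heu hne.
case: cw hw => [|[|[|cw]]] // _; case: cu hu => [|[|[|cu]]] // _ /=;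
do 2?[case: ltnP => ?] => //=; lia.
Qed.

Lemma pt2 (x k k' : nat) : k < k' -> 2 * (x < k) + (x == k) <= 2 * (x < k') + (x == k').
Proof. move=> h; case: (ltngtP x k); case: (ltngtP x k') => //=; lia. Qed.

Lemma sum3 (F : 'I_3 -> nat) a b d : a != b -> a != d -> b != d ->
  F a + F b + F d = \sum_k F k.
Proof.
move=> hab had hbd.
rewrite (bigD1 a) //= (bigD1 b) /=; last by rewrite eq_sym hab.
rewrite (bigD1 d) /=; last by rewrite eq_sym had eq_sym hbd.
rewrite big1 ?addn0 ?addnA //.
move=> k; move: hab had hbd; rewrite -!val_eqE /=.
have := ltn_ord a; have := ltn_ord b; have := ltn_ord d; have := ltn_ord k.
move: (val a) (val b) (val d) (val k) => a' b' d' k'.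
case: a' => [|[|[|]]] //; case: b' => [|[|[|]]] //; case: d' => [|[|[|]]] //;
  case: k' => [|[|[|]]] //.
Qed.

Definition Kc (V : finType) (c : V -> 'I_3) (k : 'I_3) : nat :=
  \sum_w (2 * (c w < k) + (c w == k)).

Lemma card_sum (V : finType) (P : pred V) : #|[set w | P w]| = \sum_w (P w : nat).
Proof. rewrite -sum1_card big_mkcond; apply: eq_bigr => w _; rewrite inE; by case: (P w). Qed.

Lemma rk12 (V : finType) (c : V -> 'I_3) u :
  rk (key1 c) u + rk (key2 c) u + 1 = Kc c (c u).
Proof.
have -> : 1 = \sum_w ((w == u) : nat).
  by rewrite (bigD1 u) //= eqxx big1 // => w /negbTE ->.
rewrite /rk !card_sum -!big_split /=; apply: eq_bigr => w _.
case: (eqVneq w u) => [->|hne]; first by rewrite !ltnn eqxx.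
rewrite /key1 /key2 addn0 -val_eqE.
apply: pt; rewrite ?ltn_ord //.
all: try exact: (ltn_ord (enum_rank _)).
by rewrite val_eqE; apply: contra hne => /eqP /enum_rank_inj ->.
Qed.

Lemma Kc_lt (V : finType) (c : V -> 'I_3) (k k' : 'I_3) w0 :
  c w0 = k -> k < k' -> Kc c k < Kc c k'.
Proof.
move=> hw hk; rewrite /Kc (bigD1 w0) //= [X in _ < X](bigD1 w0) //= hw.
rewrite ltnn eqxx hk /=; have : (k == k') = false.
  by apply/negbTE; rewrite -val_eqE /= neq_ltn hk.
move=> ->; rewrite -addSn; apply: leq_add => //.
apply: leq_sum => w _; rewrite -!val_eqE; exact: pt2.
Qed.

Lemma Kc_inj (V : finType) (c : V -> 'I_3) u v : Kc c (c u) = Kc c (c v) -> c u = c v.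
Proof.
move=> h; apply: val_inj; case: (ltngtP (c u) (c v)) => // hlt.
- by move: (Kc_lt (erefl (c u)) hlt); rewrite h ltnn.
- by move: (Kc_lt (erefl (c v)) hlt); rewrite h ltnn.
Qed.

Definition lab (V : finType) (n : nat) (c : V -> 'I_3) (x : V * 'I_n) : nat :=
  x.2 * #|V| + Pj c x.2 x.1 + 1.

Lemma lab_inj (V : finType) n c : injective (@lab V n c).
Proof.
move=> [u j] [v k]; rewrite /lab /= => /addIn h.
have hu := Pj_lt c j u; have hv := Pj_lt c k v.
have hP := mod_inj h hu hv.
have hjk : j = k.
  apply: val_inj => /=; move: h; rewrite hP => /addIn /eqP.
  rewrite eqn_mul2r => /orP [/eqP h0|/eqP //]; by move: hu; rewrite h0.
subst k; congr (_, _); exact: Pj_inj hP.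
Qed.

Lemma lab_bound (V : finType) n c (x : V * 'I_n) : 0 < lab c x <= #|{: V * 'I_n}|.
Proof.
rewrite card_prod card_ord /lab addn1 /=.
have key : forall m p j : nat, p < m -> j < n -> (j * m + p).+1 <= m * n.
  move=> m p j h1 h2; have : j.+1 * m <= n * m by rewrite leq_mul2r h2 orbT.
  lia.
exact: key (Pj_lt c x.2 x.1) (ltn_ord x.2).
Qed.

Lemma lab_labeling (V : finType) n c : is_labeling (@lab V n c).
Proof.
split; [exact: lab_bound | exact: lab_inj |].
move=> k /andP [k0 kle].
have hlt : forall x : V * 'I_n, (lab c x).-1 < #|{: V * 'I_n}|.
  move=> x; case/andP: (lab_bound c x) => ? ?; lia.
pose G x := Ordinal (hlt x).
have Ginj : injective G.
  move=> x y hxy; have h : (lab c x).-1 = (lab c y).-1 := congr1 val hxy.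
  apply: (@lab_inj V n c).
  case/andP: (lab_bound c x) => ? _; case/andP: (lab_bound c y) => ? _; lia.
have hk : k.-1 < #|{: V * 'I_n}| by rewrite prednK.
have := inj_card_onto Ginj (eq_leq (card_ord _)) (Ordinal hk).
case/codomP => x hxy; have hx : k.-1 = (lab c x).-1 := congr1 val hxy.
exists x.
case/andP: (lab_bound c x) => ? ?; lia.
Qed.

Lemma lb (V : finType) (e : rel V) n (f : V * 'I_n -> nat) : 0 < n ->
  (forall j, j < 3 -> ~ colorable e j) ->
  ld_antimagic (lexprod e (@edgeless n)) f ->
  3 <= num_weights (lexprod e (@edgeless n)) f.
Proof.
move=> n0 H [_ hw]; rewrite leqNgt; apply/negP => hlt; apply: (H _ hlt).
rewrite /num_weights.
set s := undup _.
pose i0 := Ordinal n0.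
have hm : forall x : V, index (weight (lexprod e (@edgeless n)) f (x, i0)) s < size s.
  move=> x; rewrite index_mem mem_undup; apply: map_f; by rewrite mem_enum.
exists (fun x => Ordinal (hm x)) => x y exy; apply/negP => /eqP /(congr1 val) /= heq.
have : weight (lexprod e (@edgeless n)) f (x, i0) = weight (lexprod e (@edgeless n)) f (y, i0).
  have hx : weight (lexprod e (@edgeless n)) f (x, i0) \in s.
    rewrite mem_undup; apply: map_f; by rewrite mem_enum.
  have hy : weight (lexprod e (@edgeless n)) f (y, i0) \in s.
    rewrite mem_undup; apply: map_f; by rewrite mem_enum.
  by rewrite -(nth_index 0 hx) -(nth_index 0 hy) heq.
apply/eqP; apply: hw; by rewrite /lexprod /= exy.
Qed.

Lemma splitAB (V : finType) (A B N : {set V}) (F : V -> nat) :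
  A :|: B = N -> [disjoint A & B] ->
  \sum_(u in N) F u = \sum_(u in A) F u + \sum_(u in B) F u.
Proof.
move=> <- dAB; rewrite -bigU //; apply: eq_bigl => u; by rewrite !inE.
Qed.

Lemma n_form n : 0 < n -> ~~ odd n -> n = ((n./2).-1).*2.+2.
Proof.
move=> n0 ev; have := odd_double_half n; rewrite (negbTE ev) add0n => h.
move: n0 h; case: (n./2) => [|k] n0 h; first by rewrite -h in n0.
by rewrite -h.
Qed.

Definition Dc (V : finType) (n : nat) : nat :=
  \sum_(j < n) (j * #|V| + 1) + (n./2).-1 * #|V|.-1.

Lemma S_form (V : finType) n (c : V -> 'I_3) u : 0 < n -> ~~ odd n ->
  \sum_(j < n) lab c (u, j) + 1 = Dc V n + Kc c (c u).
Proof.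
move=> n0 ev; rewrite /lab /=.
rewrite (eq_bigr (fun j : 'I_n => (j * #|V| + 1) + Pj c j u)); last by move=> j _; rewrite addnAC.
rewrite big_split /= -(big_mkord xpredT (fun j => Pj c j u)).
have -> : \sum_(0 <= j < n) Pj c j u = rk (key1 c) u + rk (key2 c) u + (n./2).-1 * #|V|.-1.
  have E := n_form n0 ev; move: E; set k := (n./2).-1 => E; by rewrite E sumP.
rewrite -rk12 /Dc.
have gen : forall a b c d : nat, a + (b + c + d) + 1 = a + d + (b + c + 1) by move=> *; lia.
apply: gen.
Qed.

Lemma w_form (V : finType) (e : rel V) n (c : V -> 'I_3) v (i : 'I_n) :
  weight (lexprod e (@edgeless n)) (lab c) (v, i) =
  \sum_(u in nbhd e v) \sum_(j < n) lab c (u, j).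
Proof.
rewrite /weight /lexprod /edgeless /=.
rewrite (pair_big_dep (fun u => u \in nbhd e v) (fun _ _ => true) (fun u j => lab c (u, j))) /=.
apply: eq_big => [[u j]|[u j] _] //=; by rewrite /nbhd inE andbT andbF orbF.
Qed.

Lemma w_form2 (V : finType) (e : rel V) n r (c : V -> 'I_3) v (i : 'I_n)
  (A B : {set V}) (a b : 'I_3) : 0 < n -> ~~ odd n ->
  A :|: B = nbhd e v -> [disjoint A & B] -> #|A| = r -> #|B| = r ->
  {in A, forall y, c y = a} -> {in B, forall y, c y = b} ->
  weight (lexprod e (@edgeless n)) (lab c) (v, i) + 2 * r
    = r * (Dc V n + Kc c a) + r * (Dc V n + Kc c b).
Proof.
move=> n0 ev hU hd hA hB ca cb.
have h1 : \sum_(u in nbhd e v) 1 = 2 * r.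
  by rewrite (splitAB _ hU hd) !sum1_card hA hB; lia.
rewrite w_form -h1 -big_split /= (splitAB _ hU hd).
rewrite (eq_bigr (fun _ => Dc V n + Kc c a)); last by move=> u uA; rewrite S_form // ca.
rewrite [X in _ + X](eq_bigr (fun _ => Dc V n + Kc c b)); last by move=> u uB; rewrite S_form // cb.
by rewrite !sum_nat_const hA hB.
Qed.

Theorem mainTheorem12 (V : finType) (e : rel V) (n r m : nat) :
  0 < n -> ~~ odd n ->
  simple_graph e ->
  1 <= r ->
  regular e (2 * r) ->
  #|V| = m ->
  chromatic_number_eq e 3 ->
  (exists c : V -> 'I_3,
     proper_coloring e c /\
     forall v : V, exists (A B : {set V}) (a b : 'I_3),
       [/\ A :|: B = nbhd e v, [disjoint A & B], #|A| = r & #|B| = r] /\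
       [/\ a != b, {in A, forall y, c y = a} & {in B, forall y, c y = b}]) ->
  chi_ld_eq (lexprod e (@edgeless n)) 3.
Proof.
move=> n0 ev _ r1 _ _ [_ nc] [c [pc hc]].
pose T := \sum_k Kc c k.
have key : forall v (i : 'I_n), weight (lexprod e (@edgeless n)) (lab c) (v, i) + 2 * r
     + r * Kc c (c v) = 2 * r * Dc V n + r * T.
  move=> v i; have [A [B [a [b [[hU hd hA hB] [hab ca cb]]]]]] := hc v.
  have hne : forall (X : {set V}) k, #|X| = r -> X \subset nbhd e v ->
      {in X, forall y, c y = k} -> k != c v.
    move=> X k hX hXs cX; have : 0 < #|X| by rewrite hX.
    case/card_gt0P => y yX; have : y \in nbhd e v by apply: (subsetP hXs).
    rewrite inE => evy; have := pc _ _ evy; by rewrite (cX y yX) eq_sym.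
  have sA : A \subset nbhd e v by rewrite -hU subsetUl.
  have sB : B \subset nbhd e v by rewrite -hU subsetUr.
  have ha := hne A a hA sA ca.
  have hb := hne B b hB sB cb.
  have h3 := sum3 (Kc c) hab ha hb.
  rewrite (w_form2 i n0 ev hU hd hA hB ca cb) /T -h3.
  have gen : forall D x y z r : nat, r * (D + x) + r * (D + y) + r * z = 2 * r * D + r * (x + y + z)
    by move=> *; nia.
  apply: gen.
have r0 : 0 < r by [].
split; last by move=> f hf; exact: lb n0 nc hf.
exists (lab c).
have anti : ld_antimagic (lexprod e (@edgeless n)) (lab c).
  split; first exact: lab_labeling.
  move=> [x i] [y j] hexy.
  have exy : e x y by move: hexy; rewrite /lexprod /edgeless /= andbF orbF.
  apply/negP => /eqP hw.
  have h1 := key x i; have h2 := key y j; rewrite hw in h1.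
  have : r * Kc c (c x) = r * Kc c (c y).
    have gen : forall W A R x y : nat, W + A + x = R -> W + A + y = R -> x = y by move=> *; lia.
    exact: gen h1 h2.
  move/eqP; rewrite eqn_mul2l => /orP [/eqP r00 | /eqP /Kc_inj hcxy].
    by rewrite r00 in r0.
  by move: (pc _ _ exy); rewrite hcxy eqxx.
split => //.
apply/eqP; rewrite eqn_leq; apply/andP; split; last exact: lb.
rewrite /num_weights.
have sub : {subset undup [seq weight (lexprod e (@edgeless n)) (lab c) u | u <- enum {: V * 'I_n}]
   <= [seq (2 * r * Dc V n + r * T) - 2 * r - r * Kc c k | k <- enum 'I_3]}.
  move=> w; rewrite mem_undup => /mapP [[x i] _ ->]; apply/mapP; exists (c x).
    by rewrite mem_enum.
  have := key x i; move: (weight _ _ _) => W; lia.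
apply: leq_trans (uniq_leq_size (undup_uniq _) sub) _.
by rewrite size_map size_enum_ord.
Qed.
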